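(* Let $A=\langle a_1,a_2\mid \Pi(a_1,a_2,m_A)=\Pi(a_2,a_1,m_A)\rangle$ be a dihedral Artin group with $m_A<\infty$. Let $k_1,k_2\in\mathbb{Z}$ with $k_2\neq0$. Then the centralizer of $\delta_A^{k_1}a_1^{k_2}$ in $A$ is the free abelian group generated by $\delta_A$ and $a_1$.
   Context: $\Pi(s,t,m)$ denotes the alternating word $sts\cdots$ of length $m$; $m_A\ge 2$ is an integer. $\Delta_A=\Pi(a_1,a_2,m_A)=\Pi(a_2,a_1,m_A)$ is the Garside element, and $\delta_A=\Delta_A^2$ if $m_A$ is odd, $\delta_A=\Delta_A$ if $m_A$ is even. *)

(* Defs.v *)
(* The dihedral Artin group A_m = < a1, a2 | Pi(a1,a2,m) = Pi(a2,a1,m) >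
   is realized as the quotient of the free monoid on the letters a1^{+-1}, a2^{+-1}
   by the congruence generated by free cancellation and the defining relation. *)
From Stdlib Require Import List ZArith Arith.
Import ListNotations.

(* A letter is (generator, inverted?) ; generator false = a1, true = a2. *)
Definition letter := (bool * bool)%type.
Definition word := list letter.

Definition a1 : letter := (false, false).
Definition a2 : letter := (true, false).

Definition linv (x : letter) : letter := (fst x, negb (snd x)).
Definition winv (w : word) : word := rev (map linv w).

Fixpoint Pi (s t : letter) (m : nat) : word :=
  match m with
  | O => []
  | S m' => s :: Pi t s m'
  end.

Inductive artin_eq (m : nat) : word -> word -> Prop :=
| ae_refl : forall u, artin_eq m u u
| ae_sym : forall u v, artin_eq m u v -> artin_eq m v u
| ae_trans : forall u v w, artin_eq m u v -> artin_eq m v w -> artin_eq m u w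
| ae_cong : forall p q u v, artin_eq m u v -> artin_eq m (p ++ u ++ q) (p ++ v ++ q)
| ae_free : forall x, artin_eq m [x; linv x] []
| ae_rel : artin_eq m (Pi a1 a2 m) (Pi a2 a1 m).

Fixpoint wrep (w : word) (n : nat) : word :=
  match n with O => [] | S n' => w ++ wrep w n' end.
Definition wpow (w : word) (k : Z) : word :=
  if (0 <=? k)%Z then wrep w (Z.to_nat k) else wrep (winv w) (Z.to_nat (- k)).

Definition Delta (m : nat) : word := Pi a1 a2 m.
Definition delta (m : nat) : word :=
  if Nat.odd m then Delta m ++ Delta m else Delta m.

(* Main.v *)
Require Import Defs.
From Stdlib Require Import List ZArith Arith Lia Bool Setoid Morphisms Classical.
Import ListNotations.

Lemma ae_app m u u' v v' : artin_eq m u u' -> artin_eq m v v' -> artin_eq m (u ++ v) (u' ++ v').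
Proof.
  intros H1 H2. apply ae_trans with (u' ++ v).
  - pose proof (ae_cong m [] v u u' H1) as H. simpl in H. exact H.
  - pose proof (ae_cong m u' [] v v' H2) as H. rewrite !app_nil_r in H. exact H.
Qed.

#[global] Instance ae_Equiv m : Equivalence (artin_eq m).
Proof. split; [intro; apply ae_refl | intros ??; apply ae_sym | intros ???; apply ae_trans]. Qed.
#[global] Instance app_Proper m : Proper (artin_eq m ==> artin_eq m ==> artin_eq m) (@app letter).
Proof. intros ?? H ?? H'. now apply ae_app. Qed.
#[global] Instance cons_Proper m x : Proper (artin_eq m ==> artin_eq m) (cons x).
Proof. intros u v H. change (artin_eq m ([x] ++ u) ([x] ++ v)). now rewrite H. Qed.

Lemma linv_linv x : linv (linv x) = x.
Proof. destruct x as [a b]; unfold linv; simpl; now rewrite negb_involutive. Qed.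

Lemma free_r m x : artin_eq m [x; linv x] [].
Proof. apply ae_free. Qed.
Lemma free_l m x : artin_eq m [linv x; x] [].
Proof. pose proof (ae_free m (linv x)) as H. now rewrite linv_linv in H. Qed.

Lemma winv_cons x w : winv (x :: w) = winv w ++ [linv x].
Proof. reflexivity. Qed.
Lemma winv_app u v : winv (u ++ v) = winv v ++ winv u.
Proof. unfold winv. now rewrite map_app, rev_app_distr. Qed.
Lemma winv_winv w : winv (winv w) = w.
Proof. unfold winv. rewrite map_rev, rev_involutive, map_map.
  erewrite map_ext; [apply map_id|]. intro; apply linv_linv. Qed.
Lemma winv_nil : winv [] = []. Proof. reflexivity. Qed.

Lemma winv_r m w : artin_eq m (w ++ winv w) [].
Proof.
  induction w as [|x w IH]; [reflexivity|].
  rewrite winv_cons. simpl. rewrite app_assoc, IH. simpl. apply ae_free.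
Qed.
Lemma winv_l m w : artin_eq m (winv w ++ w) [].
Proof. pose proof (winv_r m (winv w)) as H. now rewrite winv_winv in H. Qed.

Lemma cancel_l m u v v' : artin_eq m (u ++ v) (u ++ v') -> artin_eq m v v'.
Proof.
  intro H. transitivity ((winv u ++ u) ++ v). { rewrite winv_l. reflexivity. }
  rewrite <- app_assoc, H, app_assoc, winv_l. reflexivity.
Qed.
Lemma cancel_r m u v v' : artin_eq m (v ++ u) (v' ++ u) -> artin_eq m v v'.
Proof.
  intro H. transitivity (v ++ (u ++ winv u)). { rewrite winv_r, app_nil_r. reflexivity. }
  rewrite app_assoc, H, <- app_assoc, winv_r, app_nil_r. reflexivity.
Qed.

Lemma inv_unique m u v : artin_eq m (u ++ v) [] -> artin_eq m (winv u) v.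
Proof.
  intro H. transitivity (winv u ++ (u ++ v)). { rewrite H, app_nil_r. reflexivity. }
  rewrite app_assoc, winv_l. reflexivity.
Qed.

#[global] Instance winv_Proper m : Proper (artin_eq m ==> artin_eq m) winv.
Proof.
  intros u v H. apply inv_unique. rewrite H. apply winv_r.
Qed.

Lemma wrep_r w n : wrep w (S n) = wrep w n ++ w.
Proof. change (wrep w (S n)) with (w ++ wrep w n). induction n.
  - simpl. now rewrite app_nil_r.
  - change (wrep w (S n)) with (w ++ wrep w n). rewrite IHn at 1. now rewrite app_assoc. Qed.
Lemma wrep_add w a b : wrep w (a + b) = wrep w a ++ wrep w b.
Proof. induction a; simpl; [reflexivity|]. now rewrite IHa, app_assoc. Qed.
#[global] Instance wrep_Proper m : Proper (artin_eq m ==> eq ==> artin_eq m) wrep.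
Proof. intros u v H n ? <-. induction n; simpl; [reflexivity|]. now apply ae_app. Qed.

Lemma wpow_nat w n : wpow w (Z.of_nat n) = wrep w n.
Proof. unfold wpow. replace (0 <=? Z.of_nat n)%Z with true by (symmetry; apply Z.leb_le; lia).
  now rewrite Nat2Z.id. Qed.
Lemma wpow_negnat w n : wpow w (- Z.of_nat n) = wrep (winv w) n.
Proof. unfold wpow. destruct n. - reflexivity.
  - replace (0 <=? - Z.of_nat (S n))%Z with false by (symmetry; apply Z.leb_gt; lia).
    now rewrite Z.opp_involutive, Nat2Z.id. Qed.
Lemma wpow_0 w : wpow w 0 = []. Proof. reflexivity. Qed.
Lemma wpow_1 m w : artin_eq m (wpow w 1) w.
Proof. unfold wpow; simpl. now rewrite app_nil_r. Qed.
Lemma wpow_m1 m w : artin_eq m (wpow w (-1)) (winv w).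
Proof. unfold wpow; simpl. now rewrite app_nil_r. Qed.

#[global] Instance wpow_Proper m : Proper (artin_eq m ==> eq ==> artin_eq m) wpow.
Proof. intros u v H k ? <-. unfold wpow. destruct (0 <=? k)%Z; now rewrite H. Qed.

Lemma wpow_succ m w k : artin_eq m (wpow w (k + 1)) (wpow w k ++ w).
Proof.
  destruct (Z_le_gt_dec 0 k).
  - replace k with (Z.of_nat (Z.to_nat k)) by lia.
    replace (Z.of_nat (Z.to_nat k) + 1)%Z with (Z.of_nat (S (Z.to_nat k))) by lia.
    rewrite !wpow_nat, wrep_r. reflexivity.
  - set (j := Z.to_nat (- k - 1)).
    replace k with (- Z.of_nat (S j))%Z by lia.
    replace (- Z.of_nat (S j) + 1)%Z with (- Z.of_nat j)%Z by lia.
    rewrite !wpow_negnat, wrep_r, <- app_assoc, winv_l, app_nil_r. reflexivity.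
Qed.
Lemma wpow_pred m w k : artin_eq m (wpow w (k - 1)) (wpow w k ++ winv w).
Proof.
  pose proof (wpow_succ m w (k - 1)) as H. replace (k - 1 + 1)%Z with k in H by lia.
  rewrite H, <- app_assoc, winv_r, app_nil_r. reflexivity.
Qed.
Lemma wpow_add m w a b : artin_eq m (wpow w (a + b)) (wpow w a ++ wpow w b).
Proof.
  induction b using Z.peano_ind.
  - rewrite Z.add_0_r, wpow_0, app_nil_r. reflexivity.
  - rewrite <- Z.add_1_r, Z.add_assoc, !wpow_succ, IHb, app_assoc. reflexivity.
  - rewrite <- Z.sub_1_r, Z.add_sub_assoc, !wpow_pred, IHb, app_assoc. reflexivity.
Qed.
Lemma wpow_inv m w a : artin_eq m (winv (wpow w a)) (wpow w (- a)).
Proof. apply inv_unique. rewrite <- wpow_add, Z.add_opp_diag_r. reflexivity. Qed.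
Lemma wpow_mul m w a b : artin_eq m (wpow (wpow w a) b) (wpow w (a * b)).
Proof.
  induction b using Z.peano_ind.
  - rewrite Z.mul_0_r. reflexivity.
  - rewrite <- Z.add_1_r, wpow_succ, IHb, <- wpow_add. f_equiv. lia.
  - rewrite <- Z.sub_1_r, wpow_pred, IHb, wpow_inv, <- wpow_add. f_equiv. lia.
Qed.
Lemma wpow_comm m w a b : artin_eq m (wpow w a ++ wpow w b) (wpow w b ++ wpow w a).
Proof. rewrite <- !wpow_add, Z.add_comm. reflexivity. Qed.

Definition comm m u v := artin_eq m (u ++ v) (v ++ u).
Lemma comm_winv m u v : comm m u v -> comm m (winv u) v.
Proof.
  unfold comm; intro H.
  transitivity (winv u ++ v ++ (u ++ winv u)). { rewrite winv_r, app_nil_r. reflexivity. }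
  rewrite (app_assoc v), <- H, <- app_assoc, app_assoc, winv_l. reflexivity.
Qed.
Lemma comm_wpow m u v k : comm m u v -> comm m (wpow u k) v.
Proof.
  intro H. assert (Hi := comm_winv _ _ _ H). unfold comm in *.
  induction k using Z.peano_ind.
  - rewrite wpow_0, app_nil_r. reflexivity.
  - rewrite <- Z.add_1_r, wpow_succ, <- app_assoc, H, app_assoc, IHk, <- app_assoc. reflexivity.
  - rewrite <- Z.sub_1_r, wpow_pred, <- app_assoc, Hi, app_assoc, IHk, <- app_assoc. reflexivity.
Qed.

Definition central m c := forall v, comm m c v.
Lemma central_letters m c :
  comm m c [a1] -> comm m c [a2] -> central m c.
Proof.
  intros H1 H2.
  assert (Hx : forall x, comm m c [x]).
  { intros [[|] [|]].
    - pose proof (comm_winv m [a2] c) as H. unfold comm in *. symmetry. apply H. now symmetry.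
    - exact H2.
    - pose proof (comm_winv m [a1] c) as H. unfold comm in *. symmetry. apply H. now symmetry.
    - exact H1. }
  intro v; induction v as [|x v IH]; unfold comm in *.
  - now rewrite app_nil_r.
  - change (x :: v) with ([x] ++ v). rewrite app_assoc, Hx, <- app_assoc, IH, app_assoc. reflexivity.
Qed.
Lemma central_wpow m c k : central m c -> central m (wpow c k).
Proof. intros H v. apply comm_wpow, H. Qed.

Lemma Pi_snoc s t k : Pi s t (S k) = Pi s t k ++ [if Nat.even k then s else t].
Proof.
  revert s t; induction k; intros s t; [reflexivity|].
  change (Pi s t (S (S k))) with (s :: Pi t s (S k)). rewrite IHk.
  rewrite Nat.even_succ, <- Nat.negb_even. destruct (Nat.even k); reflexivity.
Qed.

Lemma Pi_SS s t k : Pi s t (S (S k)) = [s; t] ++ Pi s t k.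
Proof. reflexivity. Qed.
Lemma Pi_even s t j : Pi s t (2 * j) = wrep [s; t] j.
Proof.
  induction j; [reflexivity|].
  replace (2 * S j) with (S (S (2 * j))) by lia. rewrite Pi_SS, IHj. reflexivity.
Qed.
Lemma Pi_odd s t j : Pi s t (2 * j + 1) = wrep [s; t] j ++ [s].
Proof.
  induction j; [reflexivity|].
  replace (2 * S j + 1) with (S (S (2 * j + 1))) by lia. rewrite Pi_SS, IHj. reflexivity.
Qed.
Lemma wrep_shift s t j : s :: wrep [t; s] j = wrep [s; t] j ++ [s].
Proof. induction j; [reflexivity|]. simpl. rewrite IHj. reflexivity. Qed.

Lemma Delta_a2 m m' : m = S m' ->
  artin_eq m ([a2] ++ Delta m) (Delta m ++ [if Nat.even m' then a1 else a2]).
Proof.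
  intros ->. unfold Delta.
  transitivity (Pi a2 a1 (S m') ++ [if Nat.even m' then a1 else a2]).
  - rewrite (Pi_snoc a1 a2 m'). reflexivity.
  - rewrite <- (ae_rel (S m')). reflexivity.
Qed.
Lemma Delta_a1 m m' : m = S m' ->
  artin_eq m ([a1] ++ Delta m) (Delta m ++ [if Nat.even m' then a2 else a1]).
Proof.
  intros ->. unfold Delta. rewrite (ae_rel (S m')) at 1.
  rewrite (Pi_snoc a2 a1 m'). reflexivity.
Qed.

Lemma delta_central m : (1 <= m)%nat -> central m (delta m).
Proof.
  intro Hm. destruct m as [|m']; [lia|].
  pose proof (Delta_a1 (S m') m' eq_refl) as H1.
  pose proof (Delta_a2 (S m') m' eq_refl) as H2.
  unfold delta. rewrite Nat.odd_succ.
  destruct (Nat.even m') eqn:E; apply central_letters; unfold comm.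
  - rewrite <- app_assoc, <- H2, !app_assoc, <- H1. reflexivity.
  - rewrite <- app_assoc, <- H1, !app_assoc, <- H2. reflexivity.
  - now rewrite H1.
  - now rewrite H2.
Qed.

Local Open Scope Z_scope.

Definition syl := (bool * Z)%type.
Definition nrm (o : bool -> Z) (b : bool) (e : Z) : Z :=
  if (o b =? 0)%Z then e else (e mod o b)%Z.
Definition cons_syl (b : bool) (e : Z) (t : list syl) : list syl :=
  if (e =? 0)%Z then t else (b, e) :: t.
Definition pre (o : bool -> Z) (x : syl) (t : list syl) : list syl :=
  match x with (b, e) =>
  match t with
  | (b', e') :: t' => if Bool.eqb b b' then cons_syl b (nrm o b (e + e')) t'
                      else cons_syl b (nrm o b e) t
  | [] => cons_syl b (nrm o b e) []
  end end.
Definition ok o (x : syl) := nrm o (fst x) (snd x) = snd x /\ snd x <> 0%Z.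
Definition hdne (b : bool) (t : list syl) : Prop :=
  match t with [] => True | (b', _) :: _ => b <> b' end.
Fixpoint valid o (t : list syl) : Prop :=
  match t with [] => True | x :: t' => ok o x /\ hdne (fst x) t' /\ valid o t' end.
Definition mr o (s t : list syl) := fold_right (pre o) t s.

Lemma cons_syl_0 b e t : e = 0 -> cons_syl b e t = t.
Proof. intros ->. reflexivity. Qed.
Lemma cons_syl_n0 b e t : e <> 0 -> cons_syl b e t = (b, e) :: t.
Proof. intro H. unfold cons_syl. now rewrite (proj2 (Z.eqb_neq _ _) H). Qed.
Lemma pre_same o b e e' t : pre o (b, e) ((b, e') :: t) = cons_syl b (nrm o b (e + e')) t.
Proof. destruct b; reflexivity. Qed.
Lemma pre_diff o b e b' e' t : b <> b' ->
  pre o (b, e) ((b', e') :: t) = cons_syl b (nrm o b e) ((b', e') :: t).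
Proof. intro H; destruct b, b'; try congruence; reflexivity. Qed.
Lemma pre_nil o b e : pre o (b, e) [] = cons_syl b (nrm o b e) [].
Proof. reflexivity. Qed.

Definition opos (o : bool -> Z) := forall b, (0 <= o b)%Z.

Lemma nrm_idem o b e : opos o -> nrm o b (nrm o b e) = nrm o b e.
Proof. intro Ho. unfold nrm. destruct (o b =? 0)%Z eqn:E; [reflexivity|].
  apply Z.mod_mod. now apply Z.eqb_neq. Qed.
Lemma nrm_add_l o b x y : nrm o b (nrm o b x + y) = nrm o b (x + y).
Proof. unfold nrm. destruct (o b =? 0)%Z; [reflexivity|]. apply Zplus_mod_idemp_l. Qed.
Lemma nrm_add_r o b x y : nrm o b (x + nrm o b y) = nrm o b (x + y).
Proof. unfold nrm. destruct (o b =? 0)%Z; [reflexivity|]. apply Zplus_mod_idemp_r. Qed.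
Lemma nrm_0 o b : nrm o b 0 = 0%Z.
Proof. unfold nrm. destruct (o b =? 0)%Z; [reflexivity|]. apply Zmod_0_l. Qed.

Lemma cons_syl_valid o b e t : opos o -> valid o t -> hdne b t -> nrm o b e = e ->
  valid o (cons_syl b e t).
Proof.
  intros Ho Ht Hh He. unfold cons_syl. destruct (e =? 0)%Z eqn:E; [exact Ht|].
  simpl. split; [split; [exact He | now apply Z.eqb_neq] | split; assumption].
Qed.

Lemma pre_valid o x t : opos o -> valid o t -> valid o (pre o x t).
Proof.
  intros Ho Ht. destruct x as [b e]. destruct t as [|[b' e'] t']; simpl.
  - apply cons_syl_valid; simpl; auto using nrm_idem.
  - destruct (Bool.eqb b b') eqn:E.
    + apply Bool.eqb_prop in E; subst b'. destruct Ht as [_ [Hh Ht]].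
      apply cons_syl_valid; auto using nrm_idem.
    + apply cons_syl_valid; auto using nrm_idem.
      simpl. intro C; subst. now rewrite Bool.eqb_reflx in E.
Qed.

Lemma mr_valid o s t : opos o -> valid o t -> valid o (mr o s t).
Proof. intros Ho Ht. induction s; simpl; auto using pre_valid. Qed.

Lemma mr_app o s1 s2 t : mr o (s1 ++ s2) t = mr o s1 (mr o s2 t).
Proof. apply fold_right_app. Qed.

Lemma pre_norm o b e t : opos o -> pre o (b, nrm o b e) t = pre o (b, e) t.
Proof.
  intro Ho. destruct t as [|[b' e'] t']; simpl.
  - now rewrite nrm_idem.
  - destruct (Bool.eqb b b'); [now rewrite nrm_add_l | now rewrite nrm_idem].
Qed.

Lemma pre_zero o b e t : opos o -> nrm o b e = 0%Z -> valid o t -> pre o (b, e) t = t.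
Proof.
  intros Ho He Ht. destruct t as [|[b' e'] t']; simpl.
  - now rewrite He.
  - destruct (Bool.eqb b b') eqn:E.
    + apply Bool.eqb_prop in E; subst b'. destruct Ht as [[H1 H2] _]. simpl in *.
      rewrite <- nrm_add_l, He, Z.add_0_l, H1. unfold cons_syl.
      now rewrite (proj2 (Z.eqb_neq _ _) H2).
    + now rewrite He.
Qed.

Lemma pre_act o b e1 e2 t : opos o -> valid o t ->
  pre o (b, e1) (pre o (b, e2) t) = pre o (b, e1 + e2) t.
Proof.
  intros Ho Ht.
  assert (Hgen : forall e2 t0, valid o t0 -> hdne b t0 ->
     pre o (b, e1) (cons_syl b (nrm o b e2) t0) = cons_syl b (nrm o b (e1 + e2)) t0).
  { clear. intros e2 t0 Hv Hh. destruct (Z.eq_dec (nrm o b e2) 0) as [E|E].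
    - rewrite (cons_syl_0 _ _ _ E). rewrite <- nrm_add_r, E, Z.add_0_r.
      destruct t0 as [|[b' e'] t0']; [reflexivity|].
      simpl in Hh. rewrite pre_diff by exact Hh. reflexivity.
    - rewrite (cons_syl_n0 _ _ _ E). rewrite pre_same. now rewrite nrm_add_r. }
  destruct t as [|[b' e'] t'].
  - rewrite !pre_nil. apply Hgen; simpl; auto.
  - destruct (bool_dec b b') as [<-|Hne].
    + destruct Ht as [[H1 H2] [Hh Ht]]. simpl in H1, H2, Hh.
      rewrite !pre_same. rewrite <- (nrm_idem o b (e2 + e')) by exact Ho.
      rewrite Hgen by assumption. rewrite nrm_add_r, Z.add_assoc. reflexivity.
    + rewrite !pre_diff by exact Hne. apply Hgen; auto.
Qed.

Lemma pre_cancel o b e1 e2 t : opos o -> valid o t -> nrm o b (e1 + e2) = 0%Z ->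
  pre o (b, e1) (pre o (b, e2) t) = t.
Proof. intros. rewrite pre_act by auto. now apply pre_zero. Qed.

Lemma pre_cons_ok o x v : ok o x -> hdne (fst x) v -> pre o x v = x :: v.
Proof.
  destruct x as [b e]; intros [H1 H2] Hh. simpl in *.
  destruct v as [|[b' e'] v']; simpl.
  - rewrite H1. unfold cons_syl. now rewrite (proj2 (Z.eqb_neq _ _) H2).
  - simpl in Hh. destruct (Bool.eqb b b') eqn:E; [apply Bool.eqb_prop in E; congruence|].
    rewrite H1. unfold cons_syl. now rewrite (proj2 (Z.eqb_neq _ _) H2).
Qed.

Lemma valid_app_r o g u : valid o (g ++ u) -> valid o u.
Proof. induction g; simpl; tauto. Qed.
Lemma valid_app_l o g u : valid o (g ++ u) -> valid o g.
Proof.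
  induction g as [|x g IH]; simpl; [auto|]. intros [H1 [H2 H3]]. split; [exact H1|split; [|auto]].
  destruct g as [|y g]; simpl in *; auto.
Qed.

Lemma mr_id o g u : valid o (g ++ u) -> mr o g u = g ++ u.
Proof.
  induction g as [|x g IH]; simpl; [auto|]. intros [H1 [H2 H3]].
  rewrite IH by exact H3. now apply pre_cons_ok.
Qed.
Lemma mr_nil o g : valid o g -> mr o g [] = g.
Proof. intro H. rewrite mr_id; [apply app_nil_r|now rewrite app_nil_r]. Qed.

Lemma mr_cons o x s t : mr o (x :: s) t = pre o x (mr o s t).
Proof. reflexivity. Qed.
Lemma mr_nil_l o t : mr o [] t = t.
Proof. reflexivity. Qed.

Lemma pre_mr o x g t : opos o -> valid o g -> valid o t ->
  pre o x (mr o g t) = mr o (pre o x g) t.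
Proof.
  intros Ho Hg Ht. destruct x as [b e]. destruct g as [|[b' e'] g'].
  - rewrite pre_nil, mr_nil_l. destruct (Z.eq_dec (nrm o b e) 0) as [E|E].
    + rewrite cons_syl_0 by exact E. now apply pre_zero.
    + rewrite cons_syl_n0 by exact E. rewrite mr_cons, mr_nil_l. now rewrite pre_norm.
  - destruct Hg as [Hok [Hh Hg']]. rewrite mr_cons.
    assert (Hv : valid o (mr o g' t)) by (apply mr_valid; auto).
    destruct (bool_dec b b') as [<-|Hne].
    + rewrite pre_act by auto. rewrite pre_same.
      destruct (Z.eq_dec (nrm o b (e + e')) 0) as [E|E].
      * rewrite cons_syl_0 by exact E. apply pre_zero; auto.
      * rewrite cons_syl_n0 by exact E. rewrite mr_cons. now rewrite pre_norm.
    + rewrite pre_diff by exact Hne.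
      destruct (Z.eq_dec (nrm o b e) 0) as [E|E].
      * rewrite cons_syl_0 by exact E. rewrite mr_cons. apply pre_zero; auto using pre_valid.
      * rewrite cons_syl_n0 by exact E. rewrite !mr_cons. now rewrite pre_norm.
Qed.

Lemma mr_mr o s t : opos o -> valid o t -> mr o s t = mr o (mr o s []) t.
Proof.
  intros Ho Ht. induction s as [|x s IH]; [reflexivity|].
  rewrite !mr_cons, IH. apply pre_mr; auto. apply mr_valid; simpl; auto.
Qed.

Definition nn (m : nat) : Z := Z.of_nat (Nat.div2 m).
Definition ordm (m : nat) (b : bool) : Z :=
  if Nat.odd m then (if b then Z.of_nat m else 2) else (if b then nn m else 0).
Definition img (m : nat) (x : letter) : list syl :=
  if Nat.odd m then
    match x with
    | (false, false) => [(true, - nn m); (false, 1)]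
    | (false, true) => [(false, -1); (true, nn m)]
    | (true, false) => [(false, -1); (true, nn m + 1)]
    | (true, true) => [(true, - (nn m + 1)); (false, 1)]
    end
  else
    match x with
    | (false, false) => [(false, 1)]
    | (false, true) => [(false, -1)]
    | (true, false) => [(false, -1); (true, 1)]
    | (true, true) => [(true, -1); (false, 1)]
    end.
Definition Img m (w : word) := flat_map (img m) w.
Definition phi m w t := mr (ordm m) (Img m w) t.
Definition psi m w := phi m w [].

Lemma ordm_pos m : opos (ordm m).
Proof. intro b. unfold ordm, nn. destruct (Nat.odd m), b; simpl; try lia. apply Nat2Z.is_nonneg. Qed.
#[global] Hint Resolve ordm_pos : core.

Lemma phi_app m u v t : phi m (u ++ v) t = phi m u (phi m v t).
Proof. unfold phi, Img. now rewrite flat_map_app, mr_app. Qed.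
Lemma phi_valid m w t : valid (ordm m) t -> valid (ordm m) (phi m w t).
Proof. intro; apply mr_valid; auto. Qed.
Lemma phi_nil m t : phi m [] t = t. Proof. reflexivity. Qed.
Lemma phi_cons m x w t : phi m (x :: w) t = mr (ordm m) (img m x) (phi m w t).
Proof. unfold phi, Img. simpl flat_map. now rewrite mr_app. Qed.

Lemma par_even m j : m = (2 * j)%nat -> Nat.odd m = false /\ nn m = Z.of_nat j.
Proof.
  intros ->. split.
  - rewrite <- Nat.negb_even, Nat.even_mul. reflexivity.
  - unfold nn. now rewrite Nat.div2_double.
Qed.
Lemma par_odd m j : m = (2 * j + 1)%nat -> Nat.odd m = true /\ nn m = Z.of_nat j.
Proof.
  intros ->. split.
  - rewrite Nat.odd_add, Nat.odd_mul. reflexivity.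
  - unfold nn. replace (2 * j + 1)%nat with (S (2 * j)) by lia. now rewrite Nat.div2_succ_double.
Qed.
Lemma par_cases m : (2 <= m)%nat ->
  (exists j, m = (2 * j)%nat /\ (1 <= j)%nat) \/ (exists j, m = (2 * j + 1)%nat /\ (1 <= j)%nat).
Proof.
  intro H. pose proof (Nat.div2_odd m) as E. destruct (Nat.odd m) eqn:O; simpl in E.
  - right. exists (Nat.div2 m). split; lia.
  - left. exists (Nat.div2 m). split; lia.
Qed.

Ltac solve_nz := match goal with |- nrm _ _ ?x = 0 => replace x with 0 by lia; apply nrm_0 end.
Ltac solve_val := repeat (apply pre_valid || apply mr_valid || apply phi_valid || exact I); auto.
Ltac cancel_step := (rewrite pre_cancel; [| solve_val | solve_val | try solve_nz]).

Lemma nrm_pos o b x : 0 < o b -> nrm o b x = x mod o b.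
Proof. intro H. unfold nrm. now rewrite (proj2 (Z.eqb_neq _ _)) by lia. Qed.
Lemma nrm_z o b x : o b = 0 -> nrm o b x = x.
Proof. intro H. unfold nrm. now rewrite H. Qed.

Lemma ordm_eT m j : m = (2 * j)%nat -> ordm m true = Z.of_nat j.
Proof. intro H. destruct (par_even m j H) as [H1 H2]. unfold ordm. now rewrite H1. Qed.
Lemma ordm_eF m j : m = (2 * j)%nat -> ordm m false = 0.
Proof. intro H. destruct (par_even m j H) as [H1 H2]. unfold ordm. now rewrite H1. Qed.
Lemma ordm_oT m j : m = (2 * j + 1)%nat -> ordm m true = 2 * Z.of_nat j + 1.
Proof. intro H. destruct (par_odd m j H) as [H1 H2]. unfold ordm. rewrite H1. subst. lia. Qed.
Lemma ordm_oF m j : m = (2 * j + 1)%nat -> ordm m false = 2.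
Proof. intro H. destruct (par_odd m j H) as [H1 H2]. unfold ordm. now rewrite H1. Qed.

Lemma img_even m j x : m = (2 * j)%nat -> img m x =
    match x with
    | (false, false) => [(false, 1)]
    | (false, true) => [(false, -1)]
    | (true, false) => [(false, -1); (true, 1)]
    | (true, true) => [(true, -1); (false, 1)]
    end.
Proof. intro H. destruct (par_even m j H) as [H1 H2]. unfold img. now rewrite H1. Qed.
Lemma img_odd m j x : m = (2 * j + 1)%nat -> img m x =
    match x with
    | (false, false) => [(true, - Z.of_nat j); (false, 1)]
    | (false, true) => [(false, -1); (true, Z.of_nat j)]
    | (true, false) => [(false, -1); (true, Z.of_nat j + 1)]
    | (true, true) => [(true, - (Z.of_nat j + 1)); (false, 1)]
    end.
Proof. intro H. destruct (par_odd m j H) as [H1 H2]. unfold img. now rewrite H1, H2. Qed.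

Lemma phi_wrep_T m u b k t : (forall X, valid (ordm m) X -> phi m u X = pre (ordm m) (b, 1) X) ->
  valid (ordm m) t -> phi m (wrep u k) t = pre (ordm m) (b, Z.of_nat k) t.
Proof.
  intros H Ht. induction k as [|k IH].
  - change (wrep u 0) with (@nil letter). rewrite phi_nil. change (Z.of_nat 0) with 0.
    symmetry. apply pre_zero; auto. apply nrm_0.
  - change (wrep u (S k)) with (u ++ wrep u k). rewrite phi_app, IH, H by solve_val. rewrite pre_act by auto. f_equal. f_equal. lia.
Qed.
Lemma phi_wrep_C m u c d k t :
  (forall X, valid (ordm m) X -> phi m u X = pre (ordm m) (c, -1) (pre (ordm m) (d, 1) (pre (ordm m) (c, 1) X))) ->
  valid (ordm m) t -> phi m (wrep u k) t = pre (ordm m) (c, -1) (pre (ordm m) (d, Z.of_nat k) (pre (ordm m) (c, 1) t)).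
Proof.
  intros H Ht. induction k as [|k IH].
  - change (wrep u 0) with (@nil letter). rewrite phi_nil. change (Z.of_nat 0) with 0.
    rewrite (pre_zero _ d 0) by (auto using nrm_0; solve_val). symmetry. apply pre_cancel; auto. solve_nz.
  - change (wrep u (S k)) with (u ++ wrep u k). rewrite phi_app, IH, H by solve_val. cancel_step. rewrite pre_act by solve_val.
    f_equal. f_equal. f_equal. lia.
Qed.

Lemma phi_letter m x t : phi m [x] t = mr (ordm m) (img m x) t.
Proof. rewrite phi_cons. reflexivity. Qed.

Ltac unfold_imgs m j Hm :=
  repeat (rewrite ?phi_cons, ?phi_nil);
  first [rewrite ?(img_even m j _ Hm) | rewrite ?(img_odd m j _ Hm)];
  cbn [mr fold_right linv fst snd negb].

Lemma phi_rel m t : (2 <= m)%nat -> valid (ordm m) t ->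
  phi m (Pi a1 a2 m) t = phi m (Pi a2 a1 m) t.
Proof.
  intros H2 Ht. destruct (par_cases m H2) as [[j [Hm Hj]]|[j [Hm Hj]]].
  - rewrite Hm at 2 4. rewrite !Pi_even.
    rewrite (phi_wrep_T m [a1; a2] true j t); [| | exact Ht].
    2:{ intros X HX. unfold a1, a2. rewrite !phi_cons, phi_nil, !(img_even m j _ Hm).
        cbn [mr fold_right]. cancel_step. reflexivity. }
    rewrite (phi_wrep_C m [a2; a1] false true j t); [| | exact Ht].
    2:{ intros X HX. unfold a1, a2. rewrite !phi_cons, phi_nil, !(img_even m j _ Hm).
        cbn [mr fold_right]. reflexivity. }
    assert (Hz : nrm (ordm m) true (Z.of_nat j) = 0).
    { rewrite nrm_pos; rewrite (ordm_eT m j Hm); [apply Z_mod_same_full | lia]. }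
    rewrite !(pre_zero _ true (Z.of_nat j)) by (auto; solve_val).
    symmetry. cancel_step. reflexivity.
  - rewrite Hm at 2 4. rewrite !Pi_odd. rewrite !phi_app.
    rewrite (phi_wrep_T m [a1; a2] true j) by
      (try solve_val; intros X HX; unfold a1, a2; rewrite !phi_cons, phi_nil, !(img_odd m j _ Hm);
        cbn [mr fold_right]; cancel_step; rewrite pre_act by auto; f_equal; f_equal; lia).
    rewrite (phi_wrep_C m [a2; a1] false true j) by
      (try solve_val; intros X HX; unfold a1, a2; rewrite !phi_cons, phi_nil, !(img_odd m j _ Hm);
        cbn [mr fold_right]; f_equal; rewrite pre_act by solve_val; f_equal; f_equal; lia).
    unfold a1, a2. rewrite !phi_cons, !phi_nil, !(img_odd m j _ Hm). cbn [mr fold_right].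
    cancel_step. cancel_step. rewrite pre_act by solve_val.
    assert (Hz : nrm (ordm m) true (Z.of_nat j + (Z.of_nat j + 1)) = 0).
    { rewrite nrm_pos; rewrite (ordm_oT m j Hm); [|lia].
      replace (Z.of_nat j + (Z.of_nat j + 1)) with (2 * Z.of_nat j + 1) by lia; apply Z_mod_same_full. }
    rewrite (pre_zero _ true _ _ (ordm_pos m) Hz) by solve_val.
    rewrite <- (pre_norm _ false (-1)), <- (pre_norm _ false 1) by auto.
    rewrite !nrm_pos; rewrite (ordm_oF m j Hm); [reflexivity| lia| lia].
Qed.

Lemma phi_free m x t : (2 <= m)%nat -> valid (ordm m) t -> phi m [x; linv x] t = t.
Proof.
  intros H2 Ht. destruct (par_cases m H2) as [[j [Hm Hj]]|[j [Hm Hj]]];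
  destruct x as [[|] [|]];
  rewrite !phi_cons, phi_nil; unfold linv; cbn [fst snd negb];
  first [rewrite !(img_even m j _ Hm) | rewrite !(img_odd m j _ Hm)];
  cbn [mr fold_right]; repeat cancel_step; reflexivity.
Qed.

Lemma phi_inv m u v : (2 <= m)%nat -> artin_eq m u v ->
  forall t, valid (ordm m) t -> phi m u t = phi m v t.
Proof.
  intros H2 H. induction H; intros t Ht.
  - reflexivity.
  - symmetry; auto.
  - rewrite IHartin_eq1, IHartin_eq2 by solve_val. reflexivity.
  - rewrite !phi_app. rewrite IHartin_eq by solve_val. reflexivity.
  - rewrite phi_free, phi_nil; auto.
  - now apply phi_rel.
Qed.

Definition gen m (b : bool) : word := if b then [a1; a2] else (if Nat.odd m then Delta m else [a1]).
Definition wordOf m (x : syl) : word := wpow (gen m (fst x)) (snd x).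
Definition sec m (g : list syl) : word := flat_map (wordOf m) g.

Lemma Delta_odd m j : m = (2 * j + 1)%nat -> Delta m = wpow [a1; a2] (Z.of_nat j) ++ [a1].
Proof. intro Hm. unfold Delta. rewrite Hm, Pi_odd, wpow_nat. reflexivity. Qed.

Lemma gen_ord m b : (2 <= m)%nat -> ordm m b <> 0 ->
  artin_eq m (wpow (gen m b) (ordm m b)) (delta m).
Proof.
  intros H2 Hb. destruct (par_cases m H2) as [[j [Hm Hj]]|[j [Hm Hj]]].
  - destruct (par_even m j Hm) as [Ho _]. destruct b.
    + rewrite (ordm_eT m j Hm). unfold gen, delta, Delta. rewrite Ho, wpow_nat, <- Pi_even, <- Hm. reflexivity.
    + rewrite (ordm_eF m j Hm) in Hb. congruence.
  - destruct (par_odd m j Hm) as [Ho _]. unfold gen, delta. rewrite Ho. destruct b.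
    + rewrite (ordm_oT m j Hm).
      transitivity (Delta m ++ Pi a2 a1 m).
      2:{ unfold Delta. rewrite <- (ae_rel m). reflexivity. }
      replace (Pi a2 a1 m) with (Pi a2 a1 (2 * j + 1)) by now rewrite Hm.
      rewrite Pi_odd, (Delta_odd m j Hm), wpow_nat.
      replace (2 * Z.of_nat j + 1) with (Z.of_nat (j + j + 1)) by lia. rewrite wpow_nat.
      rewrite <- app_assoc, (app_assoc [a1]).
      change ([a1] ++ wrep [a2; a1] j) with (a1 :: wrep [a2; a1] j). rewrite wrep_shift.
      replace (j + j + 1)%nat with (S (j + j)) by lia.
      rewrite wrep_r, wrep_add, <- !app_assoc. reflexivity.
    + rewrite (ordm_oF m j Hm). unfold wpow. simpl. now rewrite app_nil_r.
Qed.

Lemma wordOf_nrm m b e : (2 <= m)%nat ->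
  exists i, artin_eq m (wordOf m (b, e)) (wordOf m (b, nrm (ordm m) b e) ++ wpow (delta m) i).
Proof.
  intro H2. unfold wordOf; simpl.
  destruct (Z.eq_dec (ordm m b) 0) as [E|E].
  - exists 0. rewrite nrm_z by exact E. now rewrite wpow_0, app_nil_r.
  - assert (Hp : 0 < ordm m b) by (pose proof (ordm_pos m b); lia).
    exists (e / ordm m b). rewrite nrm_pos by exact Hp.
    rewrite (Z.div_mod e (ordm m b)) at 1 by exact E.
    rewrite Z.add_comm, wpow_add, <- wpow_mul, gen_ord by auto. reflexivity.
Qed.

Lemma sec_cons_syl m b E t : artin_eq m (sec m (cons_syl b E t)) (wordOf m (b, E) ++ sec m t).
Proof.
  destruct (Z.eq_dec E 0) as [H|H].
  - rewrite cons_syl_0 by exact H. subst. unfold wordOf. simpl. reflexivity.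
  - rewrite cons_syl_n0 by exact H. reflexivity.
Qed.

Lemma sec_cons m x t : sec m (x :: t) = wordOf m x ++ sec m t.
Proof. reflexivity. Qed.

Lemma dcentral m i : (2 <= m)%nat -> central m (wpow (delta m) i).
Proof. intro. apply central_wpow, delta_central. lia. Qed.

Lemma pre_sec m x g : (2 <= m)%nat ->
  exists i, artin_eq m (wordOf m x ++ sec m g) (sec m (pre (ordm m) x g) ++ wpow (delta m) i).
Proof.
  intro H2. destruct x as [b e]. destruct g as [|[b' e'] g'].
  - rewrite pre_nil. destruct (wordOf_nrm m b e H2) as [i Hi]. exists i.
    rewrite sec_cons_syl, Hi. simpl sec. now rewrite !app_nil_r.
  - destruct (bool_dec b b') as [<-|Hne].
    + rewrite pre_same. destruct (wordOf_nrm m b (e + e') H2) as [i Hi]. exists i.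
      rewrite sec_cons_syl, sec_cons, app_assoc.
      unfold wordOf at 1 2. simpl fst; simpl snd. rewrite <- wpow_add.
      change (wpow (gen m b) (e + e')) with (wordOf m (b, e + e')). rewrite Hi.
      rewrite <- !app_assoc, (dcentral m i H2). reflexivity.
    + rewrite pre_diff by exact Hne. destruct (wordOf_nrm m b e H2) as [i Hi]. exists i.
      rewrite sec_cons_syl, Hi, <- !app_assoc, (dcentral m i H2). reflexivity.
Qed.

Lemma mr_sec m l g : (2 <= m)%nat ->
  exists i, artin_eq m (sec m l ++ sec m g) (sec m (mr (ordm m) l g) ++ wpow (delta m) i).
Proof.
  intro H2. induction l as [|x l [i IH]].
  - exists 0. simpl. now rewrite app_nil_r.
  - destruct (pre_sec m x (mr (ordm m) l g) H2) as [i' Hi']. exists (i' + i).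
    rewrite mr_cons, sec_cons, <- app_assoc, IH, app_assoc, Hi', wpow_add, app_assoc. reflexivity.
Qed.

Lemma cc1 m b u : artin_eq m ((b, false) :: (b, true) :: u) u.
Proof. change ((b, false) :: (b, true) :: u) with ([(b, false); linv (b, false)] ++ u). now rewrite free_r. Qed.
Lemma cc2 m b u : artin_eq m ((b, true) :: (b, false) :: u) u.
Proof. change ((b, true) :: (b, false) :: u) with ([(b, true); linv (b, true)] ++ u). now rewrite free_r. Qed.

Lemma letter_sec m x : (2 <= m)%nat -> artin_eq m [x] (sec m (img m x)).
Proof.
  intro H2. destruct (par_cases m H2) as [[j [Hm Hj]]|[j [Hm Hj]]].
  - destruct (par_even m j Hm) as [Ho _].
    rewrite (img_even m j x Hm). unfold sec, wordOf, gen. rewrite Ho.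
    destruct x as [[|] [|]]; vm_compute.
    + rewrite cc2. reflexivity.
    + rewrite cc2. reflexivity.
    + reflexivity.
    + reflexivity.
  - destruct (par_odd m j Hm) as [Ho _].
    rewrite (img_odd m j x Hm). unfold sec, wordOf, gen. rewrite Ho.
    rewrite (Delta_odd m j Hm).
    set (G := [a1; a2]). set (n := Z.of_nat j).
    destruct x as [[|] [|]]; cbn [flat_map fst snd]; rewrite ?app_nil_r.
    +
      rewrite wpow_1, app_assoc, <- wpow_add.
      replace (- (n + 1) + n) with (-1) by lia. rewrite wpow_m1. vm_compute.
      rewrite cc2. reflexivity.
    +
      rewrite wpow_m1, winv_app, wpow_inv, <- app_assoc, <- wpow_add.
      replace (- n + (n + 1)) with 1 by lia. rewrite wpow_1. unfold G. vm_compute. rewrite cc2. reflexivity.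
    +
      rewrite wpow_m1, winv_app, wpow_inv, <- app_assoc, <- wpow_add.
      replace (- n + n) with 0 by lia. rewrite wpow_0. simpl. reflexivity.
    +
      rewrite wpow_1, app_assoc, <- wpow_add.
      replace (- n + n) with 0 by lia. rewrite wpow_0. simpl. reflexivity.
Qed.

Lemma section m w : (2 <= m)%nat ->
  exists i, artin_eq m w (sec m (psi m w) ++ wpow (delta m) i).
Proof.
  intro H2. induction w as [|x w [i IH]].
  - exists 0. reflexivity.
  - destruct (mr_sec m (img m x) (psi m w) H2) as [i' Hi']. exists (i' + i).
    unfold psi. rewrite phi_cons. fold (psi m w).
    transitivity ([x] ++ (sec m (psi m w) ++ wpow (delta m) i)).
    { change (x :: w) with ([x] ++ w). apply ae_app; [reflexivity | exact IH]. }
    rewrite (letter_sec m x H2), app_assoc, Hi'.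
    rewrite wpow_add, app_assoc. reflexivity.
Qed.

Lemma phi_mr m w t : valid (ordm m) t -> phi m w t = mr (ordm m) (psi m w) t.
Proof. intro Ht. unfold psi, phi. apply mr_mr; auto. Qed.
Lemma psi_valid m w : valid (ordm m) (psi m w).
Proof. unfold psi. apply phi_valid. simpl. auto. Qed.

Lemma phi_winv_inv m u t : (2 <= m)%nat -> valid (ordm m) t -> phi m (winv u) (phi m u t) = t.
Proof.
  intros H2 Ht. rewrite <- phi_app. rewrite (phi_inv m _ [] H2 (winv_l m u) t Ht). reflexivity.
Qed.

Lemma phi_winv_pre m u b e t : (2 <= m)%nat ->
  (forall X, valid (ordm m) X -> phi m u X = pre (ordm m) (b, e) X) ->
  valid (ordm m) t -> phi m (winv u) t = pre (ordm m) (b, - e) t.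
Proof.
  intros H2 H Ht.
  rewrite <- (pre_cancel (ordm m) b e (- e) t) at 1 by (auto; solve_nz).
  rewrite <- H by solve_val. apply phi_winv_inv; solve_val.
Qed.

Lemma phi_wrep_E m u b e k t : (forall X, valid (ordm m) X -> phi m u X = pre (ordm m) (b, e) X) ->
  valid (ordm m) t -> phi m (wrep u k) t = pre (ordm m) (b, Z.of_nat k * e) t.
Proof.
  intros H Ht. induction k as [|k IH].
  - change (wrep u 0) with (@nil letter). rewrite phi_nil. simpl.
    symmetry. apply pre_zero; auto. apply nrm_0.
  - change (wrep u (S k)) with (u ++ wrep u k). rewrite phi_app, IH, H by solve_val.
    rewrite pre_act by auto. f_equal. f_equal. lia.
Qed.

Lemma phi_wpow_E m u b e k t : (2 <= m)%nat ->
  (forall X, valid (ordm m) X -> phi m u X = pre (ordm m) (b, e) X) ->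
  valid (ordm m) t -> phi m (wpow u k) t = pre (ordm m) (b, k * e) t.
Proof.
  intros H2 H Ht. destruct (Z_le_gt_dec 0 k).
  - replace k with (Z.of_nat (Z.to_nat k)) at 1 by lia. rewrite wpow_nat.
    rewrite (phi_wrep_E m u b e) by auto. rewrite Z2Nat.id by lia. reflexivity.
  - replace k with (- Z.of_nat (Z.to_nat (- k))) at 1 by lia. rewrite wpow_negnat.
    rewrite (phi_wrep_E m (winv u) b (- e)); auto.
    + rewrite Z2Nat.id by lia. f_equal. f_equal. ring.
    + intros X HX. now apply phi_winv_pre.
Qed.

Lemma phi_a1a2 m X : (2 <= m)%nat -> valid (ordm m) X ->
  phi m [a1; a2] X = pre (ordm m) (true, 1) X.
Proof.
  intros H2 HX. destruct (par_cases m H2) as [[j [Hm Hj]]|[j [Hm Hj]]];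
  unfold a1, a2; rewrite !phi_cons, phi_nil.
  - rewrite !(img_even m j _ Hm). cbn [mr fold_right]. cancel_step. reflexivity.
  - rewrite !(img_odd m j _ Hm). cbn [mr fold_right]. cancel_step.
    rewrite pre_act by auto. f_equal. f_equal. lia.
Qed.

Lemma phi_Delta_odd m j t : m = (2 * j + 1)%nat -> (1 <= j)%nat -> valid (ordm m) t ->
  phi m (Delta m) t = pre (ordm m) (false, 1) t.
Proof.
  intros Hm Hj Ht. assert (H2 : (2 <= m)%nat) by lia.
  rewrite (Delta_odd m j Hm), phi_app, wpow_nat.
  rewrite (phi_wrep_E m [a1; a2] true 1) by (auto using phi_a1a2; solve_val).
  unfold a1. rewrite phi_cons, phi_nil, (img_odd m j _ Hm). cbn [mr fold_right].
  cancel_step. reflexivity.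
Qed.

Lemma phi_delta m t : (2 <= m)%nat -> valid (ordm m) t -> phi m (delta m) t = t.
Proof.
  intros H2 Ht. destruct (par_cases m H2) as [[j [Hm Hj]]|[j [Hm Hj]]].
  - destruct (par_even m j Hm) as [Ho _]. unfold delta. rewrite Ho. unfold Delta.
    rewrite Hm at 2. rewrite Pi_even.
    rewrite (phi_wrep_E m [a1; a2] true 1) by (auto using phi_a1a2).
    apply pre_zero; auto. rewrite nrm_pos; rewrite (ordm_eT m j Hm); [|lia].
    rewrite Z.mul_1_r. apply Z_mod_same_full.
  - destruct (par_odd m j Hm) as [Ho _]. unfold delta. rewrite Ho.
    rewrite phi_app, !(phi_Delta_odd m j) by (auto; solve_val).
    rewrite pre_act by auto. apply pre_zero; auto.
    rewrite nrm_pos; rewrite (ordm_oF m j Hm); [reflexivity|lia].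
Qed.

Lemma phi_dpow m p t : (2 <= m)%nat -> valid (ordm m) t -> phi m (wpow (delta m) p) t = t.
Proof.
  intros H2 Ht. rewrite (phi_wpow_E m (delta m) false 0) by
    (auto; intros X HX; rewrite phi_delta by auto; symmetry; apply pre_zero; auto; apply nrm_0).
  apply pre_zero; auto. rewrite Z.mul_0_r. apply nrm_0.
Qed.

Lemma hdne_hd b u v : hd_error u = hd_error v -> hdne b u -> hdne b v.
Proof. destruct u as [|[? ?] ?], v as [|[? ?] ?]; simpl; intros H; try discriminate; auto.
  inversion H; subst; auto. Qed.

Lemma even_head o k g : opos o -> o false = 0 -> valid o g -> g <> [] ->
  (forall a, g <> [(false, a)]) -> hd_error (mr o g [(false, k)]) = hd_error g.
Proof.
  intros Ho HF. induction g as [|[b e] g' IH]; intros Hv Hne Hs; [congruence|].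
  destruct Hv as [Hok [Hh Hv']]. simpl in Hh.
  rewrite mr_cons. rewrite pre_cons_ok; [reflexivity|exact Hok|]. simpl fst.
  destruct g' as [|[b' e'] g''].
  - destruct b; [simpl; congruence|]. exfalso. now apply (Hs e).
  - destruct (bool_dec b' false) as [->|Hb'].
    + destruct g'' as [|y g3].
      * rewrite mr_cons, mr_nil_l, pre_same. unfold cons_syl.
        destruct (nrm o false (e' + k) =? 0); simpl; auto.
      * apply (hdne_hd b ((false, e') :: y :: g3)); [|exact Hh].
        symmetry. apply IH; auto; try congruence.
    + apply (hdne_hd b ((b', e') :: g'')); [|exact Hh].
      symmetry. apply IH; auto; try congruence.
Qed.

Lemma even_pre_head o k g : o false = 0 -> k <> 0 -> valid o g -> g <> [] ->
  hd_error (pre o (false, k) g) <> hd_error g.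
Proof.
  intros HF Hk Hv Hne. destruct g as [|[b e] g']; [congruence|].
  destruct Hv as [Hok [Hh Hv']]. simpl in Hh.
  destruct b.
  - rewrite pre_diff by congruence. rewrite nrm_z by exact HF.
    rewrite cons_syl_n0 by exact Hk. simpl. congruence.
  - rewrite pre_same, nrm_z by exact HF. destruct (Z.eq_dec (k + e) 0) as [E|E].
    + rewrite cons_syl_0 by exact E. destruct g' as [|[b' e'] g'']; simpl in *; congruence.
    + rewrite cons_syl_n0 by exact E. simpl. intro C. inversion C. lia.
Qed.

Lemma even_cent m j k w : m = (2 * j)%nat -> (1 <= j)%nat -> k <> 0 ->
  artin_eq m (w ++ wpow [a1] k) (wpow [a1] k ++ w) ->
  exists p q, artin_eq m w (wpow (delta m) p ++ wpow [a1] q).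
Proof.
  intros Hm Hj Hk H. assert (H2 : (2 <= m)%nat) by lia.
  pose proof (ordm_eF m j Hm) as HF.
  assert (Ha1 : forall X, valid (ordm m) X -> phi m [a1] X = pre (ordm m) (false, 1) X).
  { intros X HX. unfold a1. rewrite phi_cons, phi_nil, (img_even m j _ Hm). reflexivity. }
  pose proof (phi_inv m _ _ H2 H [] I) as E.
  rewrite !phi_app in E.
  rewrite (phi_wpow_E m [a1] false 1 k) in E by (auto; solve_val).
  rewrite (phi_wpow_E m [a1] false 1 k) in E by (auto; solve_val).
  rewrite (phi_mr m w) in E by (apply pre_valid; simpl; auto). fold (psi m w) in E.
  rewrite Z.mul_1_r in E. rewrite pre_nil, nrm_z, cons_syl_n0 in E by auto.
  destruct (section m w H2) as [i Hi].
  pose proof (psi_valid m w) as Hv.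
  revert E Hi Hv. generalize (psi m w). intros g E Hi Hv.
  destruct g as [|[b e] [|y g']].
  - exists i, 0. rewrite Hi. simpl. now rewrite app_nil_r.
  - destruct b.
    + exfalso. assert (Hne : [(true, e)] <> []) by congruence.
      apply (even_pre_head (ordm m) k _ HF Hk Hv Hne).
      rewrite <- E. apply even_head; auto; congruence.
    + exists i, e. rewrite Hi. unfold sec, wordOf, gen. simpl flat_map.
      destruct (par_even m j Hm) as [Ho _]. rewrite Ho, app_nil_r.
      symmetry. apply (dcentral m i H2 (wpow [a1] e)).
  - exfalso. assert (Hne : (b, e) :: y :: g' <> []) by congruence.
    apply (even_pre_head (ordm m) k _ HF Hk Hv Hne).
    rewrite <- E. apply even_head; auto; congruence.
Qed.

Lemma mod_cases x M : 0 < M -> -M <= x < 2 * M ->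
  (x < 0 /\ x mod M = x + M) \/ (0 <= x < M /\ x mod M = x) \/ (M <= x /\ x mod M = x - M).
Proof.
  intros HM Hx. destruct (Z_lt_le_dec x 0) as [H1|H1]; [left|right].
  - split; [lia|]. symmetry. apply Z.mod_unique_pos with (-1); lia.
  - destruct (Z_lt_le_dec x M) as [H2|H2]; [left|right].
    + split; [lia|]. apply Z.mod_small. lia.
    + split; [lia|]. symmetry. apply Z.mod_unique_pos with 1; lia.
Qed.

Definition starts_A (N : Z) (g : list syl) := exists g', g = (true, N + 1) :: (false, 1) :: g'.
Definition starts_AI (N : Z) (g : list syl) := exists g', g = (false, 1) :: (true, N) :: g'.
Definition ends_AI (N : Z) (g : list syl) := exists g1, g = g1 ++ [(false, 1); (true, N)].

Lemma valid_two_last o h l' l : valid o (h ++ [l'; l]) -> ok o l' /\ fst l' <> fst l.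
Proof.
  induction h as [|x h IH]; simpl.
  - destruct l as [b e]. intros [H1 [H2 _]]. simpl in H2. auto.
  - intros [_ [_ H]]. auto.
Qed.

Lemma valid_snoc_replace o g0 l u e r : valid o (g0 ++ [l]) -> valid o u -> u = (fst l, e) :: r ->
  valid o (g0 ++ u).
Proof.
  intros H Hu Eu. induction g0 as [|x g0 IH]; simpl in *; [exact Hu|].
  destruct H as [H1 [H2 H3]]. split; [exact H1|]. split; [|auto].
  destruct g0 as [|y g0]; simpl in *.
  - rewrite Eu. destruct l; simpl in *; auto.
  - exact H2.
Qed.


Lemma odd_nrmT m j x : m = (2 * j + 1)%nat ->
  nrm (ordm m) true x = x mod (2 * Z.of_nat j + 1).
Proof. intro Hm. rewrite nrm_pos; rewrite (ordm_oT m j Hm); [reflexivity|lia]. Qed.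
Lemma odd_nrmF m j x : m = (2 * j + 1)%nat -> nrm (ordm m) false x = x mod 2.
Proof. intro Hm. rewrite nrm_pos; rewrite (ordm_oF m j Hm); [reflexivity|lia]. Qed.

Lemma odd_okF m j e : m = (2 * j + 1)%nat -> ok (ordm m) (false, e) -> e = 1.
Proof.
  intros Hm [H1 H2]. simpl in H1, H2. rewrite (odd_nrmF m j e Hm) in H1.
  pose proof (Z.mod_pos_bound e 2 ltac:(lia)). lia.
Qed.
Lemma odd_okT m j c : m = (2 * j + 1)%nat -> ok (ordm m) (true, c) -> 1 <= c <= 2 * Z.of_nat j.
Proof.
  intros Hm [H1 H2]. simpl in H1, H2. rewrite (odd_nrmT m j c Hm) in H1.
  pose proof (Z.mod_pos_bound c (2 * Z.of_nat j + 1) ltac:(lia)).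
  remember (c mod (2 * Z.of_nat j + 1)) as r. lia.
Qed.
Lemma odd_okF1 m j : m = (2 * j + 1)%nat -> ok (ordm m) (false, 1).
Proof. intro Hm. split; simpl; [|lia]. rewrite (odd_nrmF m j 1 Hm). reflexivity. Qed.

Lemma odd_phi_a1 m j X : m = (2 * j + 1)%nat ->
  phi m [a1] X = pre (ordm m) (true, - Z.of_nat j) (pre (ordm m) (false, 1) X).
Proof. intro Hm. unfold a1. rewrite phi_cons, phi_nil, (img_odd m j _ Hm). reflexivity. Qed.
Lemma odd_phi_a1i m j X : m = (2 * j + 1)%nat ->
  phi m [linv a1] X = pre (ordm m) (false, -1) (pre (ordm m) (true, Z.of_nat j) X).
Proof. intro Hm. unfold a1, linv. simpl. rewrite phi_cons, phi_nil, (img_odd m j _ Hm). reflexivity. Qed.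

Lemma L_T m j X : m = (2 * j + 1)%nat -> (1 <= j)%nat -> valid (ordm m) X -> hdne false X ->
  phi m [a1] X = (true, Z.of_nat j + 1) :: (false, 1) :: X.
Proof.
  intros Hm Hj HX Hh. rewrite (odd_phi_a1 m j X Hm).
  rewrite (pre_cons_ok _ (false, 1)) by (auto; exact (odd_okF1 m j Hm)).
  rewrite pre_diff by congruence. rewrite (odd_nrmT m j _ Hm).
  replace ((- Z.of_nat j) mod (2 * Z.of_nat j + 1)) with (Z.of_nat j + 1).
  - apply cons_syl_n0. lia.
  - apply Z.mod_unique_pos with (-1); lia.
Qed.

Lemma L_F1 m j : m = (2 * j + 1)%nat -> (1 <= j)%nat ->
  phi m [a1] [(false, 1)] = [(true, Z.of_nat j + 1)].
Proof.
  intros Hm Hj. rewrite (odd_phi_a1 m j _ Hm), pre_same, (odd_nrmF m j _ Hm).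
  rewrite cons_syl_0 by reflexivity. rewrite pre_nil, (odd_nrmT m j _ Hm).
  replace ((- Z.of_nat j) mod (2 * Z.of_nat j + 1)) with (Z.of_nat j + 1).
  - apply cons_syl_n0. lia.
  - apply Z.mod_unique_pos with (-1); lia.
Qed.

Lemma L_F2 m j c t : m = (2 * j + 1)%nat -> (1 <= j)%nat ->
  valid (ordm m) ((false, 1) :: (true, c) :: t) -> c <> Z.of_nat j ->
  exists c', phi m [a1] ((false, 1) :: (true, c) :: t) = (true, c') :: t.
Proof.
  intros Hm Hj Hv Hc. destruct Hv as [_ [_ [Hok _]]].
  pose proof (odd_okT m j c Hm Hok) as Hb.
  rewrite (odd_phi_a1 m j _ Hm), pre_same, (odd_nrmF m j _ Hm).
  rewrite cons_syl_0 by reflexivity. rewrite pre_same, (odd_nrmT m j _ Hm).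
  eexists. apply cons_syl_n0.
  destruct (mod_cases (- Z.of_nat j + c) (2 * Z.of_nat j + 1)) as [[? ->]|[[? ->]|[? ->]]]; lia.
Qed.

Lemma psi_a1pow m j i : m = (2 * j + 1)%nat -> (1 <= j)%nat ->
  exists X, psi m (wrep [a1] (S i)) = (true, Z.of_nat j + 1) :: (false, 1) :: X /\ hdne false X
    /\ valid (ordm m) X.
Proof.
  intros Hm Hj. induction i as [|i [X [HX [Hh Hv]]]].
  - exists []. split; [|split; simpl; auto]. unfold psi. change (wrep [a1] 1) with ([a1] ++ []).
    rewrite phi_app, phi_nil. apply (L_T m j); simpl; auto.
  - exists ((true, Z.of_nat j + 1) :: (false, 1) :: X). split; [|split].
    + unfold psi. change (wrep [a1] (S (S i))) with ([a1] ++ wrep [a1] (S i)).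
      rewrite phi_app. fold (psi m (wrep [a1] (S i))). rewrite HX.
      apply (L_T m j); auto. rewrite <- HX. apply psi_valid. simpl. congruence.
    + simpl. congruence.
    + rewrite <- HX. apply psi_valid.
Qed.

Lemma Yhead m j g i : m = (2 * j + 1)%nat -> (1 <= j)%nat -> valid (ordm m) g -> g <> [] ->
  ~ starts_AI (Z.of_nat j) g ->
  exists c r, phi m (wrep [a1] (S i)) g = (true, c) :: r /\ (hdne false g -> c = Z.of_nat j + 1).
Proof.
  intros Hm Hj Hv Hne HAI. induction i as [|i [c [r [HY Hc]]]].
  - change (wrep [a1] 1) with ([a1] ++ []). rewrite phi_app, phi_nil.
    destruct g as [|[b e] g']; [congruence|]. destruct b.
    + exists (Z.of_nat j + 1), ((false, 1) :: (true, e) :: g'). split; auto.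
      apply (L_T m j); simpl; auto; congruence.
    + destruct Hv as [Hok [Hh Hv']].
      rewrite (odd_okF m j e Hm Hok) in *.
      destruct g' as [|[b' c] t].
      * exists (Z.of_nat j + 1), []. split; auto. apply (L_F1 m j Hm Hj).
      * simpl in Hh. destruct b'; [|congruence].
        assert (Hc : c <> Z.of_nat j) by (intro; subst; apply HAI; eexists; reflexivity).
        destruct (L_F2 m j c t Hm Hj) as [c' Hc'].
        { split; [exact (odd_okF1 m j Hm)|split; [simpl; congruence|exact Hv']]. }
        { exact Hc. }
        exists c', t. split; [exact Hc'|]. simpl. congruence.
  - exists (Z.of_nat j + 1), ((false, 1) :: (true, c) :: r). split; auto.
    change (wrep [a1] (S (S i))) with ([a1] ++ wrep [a1] (S i)). rewrite phi_app, HY.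
    apply (L_T m j); auto.
    + rewrite <- HY. solve_val.
    + simpl. congruence.
Qed.

Lemma pre_l_Ak m j l X : m = (2 * j + 1)%nat -> (1 <= j)%nat -> ok (ordm m) l ->
  l <> (true, Z.of_nat j) ->
  exists e2 r2, pre (ordm m) l ((true, Z.of_nat j + 1) :: (false, 1) :: X) = (fst l, e2) :: r2.
Proof.
  intros Hm Hj Hok Hl. destruct l as [[|] e0].
  - pose proof (odd_okT m j e0 Hm Hok).
    rewrite pre_same, (odd_nrmT m j _ Hm). simpl fst. do 2 eexists. apply cons_syl_n0.
    assert (e0 <> Z.of_nat j) by congruence.
    destruct (mod_cases (e0 + (Z.of_nat j + 1)) (2 * Z.of_nat j + 1)) as [[? ->]|[[? ->]|[? ->]]]; lia.
  - rewrite (odd_okF m j e0 Hm Hok). rewrite pre_diff by congruence.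
    rewrite (odd_nrmF m j _ Hm). simpl fst. do 2 eexists. apply cons_syl_n0. rewrite Z.mod_small by lia. lia.
Qed.

Lemma odd_contra m j g i : m = (2 * j + 1)%nat -> (1 <= j)%nat -> valid (ordm m) g -> g <> [] ->
  ~ starts_A (Z.of_nat j) g -> ~ starts_AI (Z.of_nat j) g -> ~ ends_AI (Z.of_nat j) g ->
  mr (ordm m) g (psi m (wrep [a1] (S i))) <> phi m (wrep [a1] (S i)) g.
Proof.
  intros Hm Hj Hv Hne HA HAI HE.
  destruct (psi_a1pow m j i Hm Hj) as [X [HX [HhX HvX]]].
  assert (HvA : valid (ordm m) ((true, Z.of_nat j + 1) :: (false, 1) :: X)) by (rewrite <- HX; apply psi_valid).
  rewrite HX.
  destruct (Yhead m j g i Hm Hj Hv Hne HAI) as [c [r [HY Hc]]]. rewrite HY. intro Heq.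
  destruct g as [|[b e] g']; [congruence|].
  destruct g' as [|y g''].
  - rewrite mr_cons, mr_nil_l in Heq. destruct b.
    + assert (Hc' : c = Z.of_nat j + 1) by (apply Hc; simpl; congruence).
      destruct Hv as [Hok _]. pose proof (odd_okT m j e Hm Hok).
      rewrite pre_same, (odd_nrmT m j _ Hm) in Heq.
      destruct (Z.eq_dec ((e + (Z.of_nat j + 1)) mod (2 * Z.of_nat j + 1)) 0) as [E0|E0].
      * rewrite cons_syl_0 in Heq by exact E0. discriminate.
      * rewrite cons_syl_n0 in Heq by exact E0.
        assert (E1 : (e + (Z.of_nat j + 1)) mod (2 * Z.of_nat j + 1) = c) by congruence.
        destruct (mod_cases (e + (Z.of_nat j + 1)) (2 * Z.of_nat j + 1) ltac:(lia) ltac:(lia)) as [[? E2]|[[? E2]|[? E2]]];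
          remember ((e + (Z.of_nat j + 1)) mod (2 * Z.of_nat j + 1)) as R; lia.
    + destruct Hv as [Hok _]. rewrite (odd_okF m j e Hm Hok) in Heq.
      rewrite pre_diff in Heq by congruence. rewrite (odd_nrmF m j _ Hm) in Heq.
      rewrite cons_syl_n0 in Heq by (rewrite Z.mod_small by lia; lia). discriminate.
  - assert (Hy : y :: g'' <> []) by congruence.
    destruct (exists_last Hy) as [g1 [l El]].
    assert (Eg : @cons syl (b, e) (y :: g'') = ((b, e) :: g1) ++ [l]) by (rewrite El; reflexivity).
    assert (Hv2 : valid (ordm m) (((b, e) :: g1) ++ [l])) by (rewrite <- Eg; exact Hv).
    assert (Hl : l <> (true, Z.of_nat j)).
    { intro Hl. subst l. assert (Hb : (b, e) :: g1 <> []) by congruence.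
      destruct (exists_last Hb) as [g2 [l' El']]. rewrite El', <- app_assoc in Hv2.
      simpl in Hv2. destruct (valid_two_last _ _ _ _ Hv2) as [Hok' Hs'].
      destruct l' as [b' e']. simpl in Hs'. destruct b'; [congruence|].
      rewrite (odd_okF m j e' Hm Hok') in El'.
      apply HE. exists g2. rewrite Eg, El', <- app_assoc. reflexivity. }
    assert (Hokl : ok (ordm m) l).
    { destruct (valid_app_r _ _ _ Hv2) as [Hx _]. exact Hx. }
    destruct (pre_l_Ak m j l X Hm Hj Hokl Hl) as [e2 [r2 Hpre]].
    assert (Hs : forall t, mr (ordm m) [l] t = pre (ordm m) l t) by reflexivity.
    rewrite Eg, mr_app, Hs, Hpre in Heq.
    rewrite mr_id in Heq.
    2:{ apply (valid_snoc_replace _ _ l _ e2 r2 Hv2); [|reflexivity]. rewrite <- Hpre. solve_val. }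
    simpl in Heq. injection Heq as Eb Ee _. subst b e.
    assert (Hc' : c = Z.of_nat j + 1) by (apply Hc; simpl; congruence). subst c.
    destruct Hv as [_ [Hh [Hy1 _]]]. destruct y as [[|] ey]; simpl in Hh; [congruence|].
    rewrite (odd_okF m j ey Hm Hy1) in *. apply HA. eexists. reflexivity.
Qed.

Lemma winv_a1 : winv [a1] = [linv a1]. Proof. reflexivity. Qed.

Lemma dc m i v : (2 <= m)%nat -> artin_eq m (wpow (delta m) i ++ v) (v ++ wpow (delta m) i).
Proof. intro H. apply (dcentral m i H v). Qed.
Lemma xr m x : artin_eq m ([x] ++ [linv x]) []. Proof. apply free_r. Qed.
Lemma xl m x : artin_eq m ([linv x] ++ [x]) []. Proof. apply free_l. Qed.

Lemma odd_cent m j k w : m = (2 * j + 1)%nat -> (1 <= j)%nat -> 0 < k ->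
  artin_eq m (w ++ wpow [a1] k) (wpow [a1] k ++ w) ->
  exists p q, artin_eq m w (wpow (delta m) p ++ wpow [a1] q).
Proof.
  intros Hm Hj Hk.
  assert (H2 : (2 <= m)%nat) by lia.
  set (N := Z.of_nat j).
  set (i := (Z.to_nat k - 1)%nat).
  assert (EP : wpow [a1] k = wrep [a1] (S i)).
  { rewrite <- wpow_nat. f_equal. unfold i. lia. }
  assert (Cl : comm m (wpow [a1] k) [linv a1]).
  { apply comm_wpow. unfold comm. change ([a1] ++ [linv a1]) with [a1; linv a1].
    change ([linv a1] ++ [a1]) with [linv a1; a1]. rewrite free_r, free_l. reflexivity. }
  assert (Cr : comm m (wpow [a1] k) [a1]).
  { apply comm_wpow. unfold comm. reflexivity. }
  unfold comm in Cl, Cr.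
  assert (main : forall n w, (length (psi m w) < n)%nat ->
     artin_eq m (w ++ wpow [a1] k) (wpow [a1] k ++ w) ->
     exists p q, artin_eq m w (wpow (delta m) p ++ wpow [a1] q)).
  2:{ intro H. apply (main (S (length (psi m w))) w); auto. }
  intro n; induction n as [|n IH]; intros w0 Hlen Hc; [lia|].
  pose proof (psi_valid m w0) as Hv.
  destruct (section m w0 H2) as [i0 Hi0].
  destruct (psi m w0) as [|x g] eqn:Eg.
  { exists i0, 0. rewrite Hi0. simpl. now rewrite app_nil_r. }
  rewrite <- Eg in *.
  assert (Hne : psi m w0 <> []) by congruence.
  clear x g Eg.
  destruct (classic (starts_A N (psi m w0))) as [[g' EA]|nA].
  {
    assert (Ep : psi m ([linv a1] ++ w0) = g').
    { unfold psi. rewrite phi_app. fold (psi m w0). rewrite EA, (odd_phi_a1i m j _ Hm).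
      rewrite pre_same, (odd_nrmT m j _ Hm).
      rewrite cons_syl_0.
      2:{ replace (Z.of_nat j + (N + 1)) with (2 * Z.of_nat j + 1) by (unfold N; lia). apply Z_mod_same_full. }
      rewrite pre_same, cons_syl_0; [reflexivity|]. rewrite (odd_nrmF m j _ Hm). reflexivity. }
    destruct (IH ([linv a1] ++ w0)) as [p [q Hpq]].
    - rewrite Ep. rewrite EA in Hlen. simpl in Hlen. lia.
    - rewrite <- app_assoc, Hc, !app_assoc, Cl. reflexivity.
    - exists p, (1 + q).
      transitivity ([a1] ++ ([linv a1] ++ w0)). { rewrite app_assoc, xr. reflexivity. }
      rewrite Hpq, wpow_add, wpow_1, app_assoc, <- (dc m p [a1] H2), app_assoc. reflexivity. }
  destruct (classic (starts_AI N (psi m w0))) as [[g' EA]|nAI].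
  { assert (Ep : psi m ([a1] ++ w0) = g').
    { unfold psi. rewrite phi_app. fold (psi m w0). rewrite EA, (odd_phi_a1 m j _ Hm).
      rewrite pre_same, (odd_nrmF m j _ Hm), cons_syl_0 by reflexivity.
      rewrite pre_same, cons_syl_0; [reflexivity|]. rewrite (odd_nrmT m j _ Hm).
      replace (- Z.of_nat j + N) with 0 by (unfold N; lia). reflexivity. }
    destruct (IH ([a1] ++ w0)) as [p [q Hpq]].
    - rewrite Ep. rewrite EA in Hlen. simpl in Hlen. lia.
    - rewrite <- app_assoc, Hc, !app_assoc, Cr. reflexivity.
    - exists p, (-1 + q).
      transitivity ([linv a1] ++ ([a1] ++ w0)). { rewrite app_assoc, xl. reflexivity. }
      rewrite Hpq, wpow_add, wpow_m1, winv_a1, app_assoc, <- (dc m p [linv a1] H2), app_assoc.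
      reflexivity. }
  destruct (classic (ends_AI N (psi m w0))) as [[g1 EA]|nE].
  { assert (Ep : psi m (w0 ++ [a1]) = g1).
    { unfold psi at 1. rewrite phi_app, phi_mr by solve_val.
      change (phi m [a1] []) with (psi m [a1]).
      unfold psi at 2. rewrite (L_T m j [] Hm Hj) by (simpl; auto).
      rewrite EA, mr_app. cbn [mr fold_right].
      rewrite pre_same, (odd_nrmT m j _ Hm), cons_syl_0.
      2:{ replace (N + (Z.of_nat j + 1)) with (2 * Z.of_nat j + 1) by (unfold N; lia). apply Z_mod_same_full. }
      rewrite pre_same, (odd_nrmF m j _ Hm), cons_syl_0 by reflexivity.
      apply mr_nil. rewrite EA in Hv. apply valid_app_l in Hv. exact Hv. }
    destruct (IH (w0 ++ [a1])) as [p [q Hpq]].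
    - rewrite Ep. rewrite EA, length_app in Hlen. simpl in Hlen. unfold syl in *. lia.
    - rewrite <- app_assoc. rewrite <- Cr, app_assoc, Hc, <- app_assoc. reflexivity.
    - exists p, (q - 1).
      transitivity ((w0 ++ [a1]) ++ [linv a1]). { rewrite <- app_assoc, xr, app_nil_r. reflexivity. }
      rewrite Hpq, wpow_pred, winv_a1, <- app_assoc. reflexivity. }
  exfalso.
  pose proof (phi_inv m _ _ H2 Hc [] I) as E.
  rewrite !phi_app, EP in E. rewrite (phi_mr m w0) in E by solve_val.
  fold (psi m (wrep [a1] (S i))) in E. fold (psi m w0) in E.
  exact (odd_contra m j (psi m w0) i Hm Hj Hv Hne nA nAI nE E).
Qed.

Lemma cent m k w : (2 <= m)%nat -> k <> 0 ->
  artin_eq m (w ++ wpow [a1] k) (wpow [a1] k ++ w) ->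
  exists p q, artin_eq m w (wpow (delta m) p ++ wpow [a1] q).
Proof.
  intros H2 Hk H. destruct (par_cases m H2) as [[j [Hm Hj]]|[j [Hm Hj]]].
  - exact (even_cent m j k w Hm Hj Hk H).
  - destruct (Z_lt_le_dec 0 k).
    + exact (odd_cent m j k w Hm Hj l H).
    + apply (odd_cent m j (- k) w Hm Hj ltac:(lia)).
      pose proof (comm_winv m (wpow [a1] k) w) as C. unfold comm in C.
      rewrite wpow_inv in C. symmetry. apply C. symmetry. exact H.
Qed.

Definition lsgn (x : letter) : Z := if snd x then -1 else 1.
Fixpoint es (w : word) : Z := match w with [] => 0 | x :: w' => lsgn x + es w' end.

Lemma es_app u v : es (u ++ v) = es u + es v.
Proof. induction u; simpl; lia. Qed.
Lemma es_Pi s t k : lsgn s = 1 -> lsgn t = 1 -> es (Pi s t k) = Z.of_nat k.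
Proof. revert s t. induction k; intros s t Hs Ht; simpl; [reflexivity|]. rewrite IHk by auto. lia. Qed.
Lemma es_inv m u v : artin_eq m u v -> es u = es v.
Proof.
  induction 1; try congruence.
  - rewrite !es_app. congruence.
  - destruct x as [b [|]]; reflexivity.
  - rewrite !es_Pi; reflexivity.
Qed.
Lemma es_winv w : es (winv w) = - es w.
Proof.
  induction w as [|x w IH]; [reflexivity|]. rewrite winv_cons, es_app, IH.
  destruct x as [b [|]]; cbn [es lsgn linv fst snd negb]; lia.
Qed.
Lemma es_wrep w n : es (wrep w n) = Z.of_nat n * es w.
Proof. induction n; simpl wrep; [reflexivity|]. rewrite es_app, IHn. lia. Qed.
Lemma es_wpow w k : es (wpow w k) = k * es w.
Proof.
  unfold wpow. destruct (0 <=? k) eqn:E.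
  - apply Z.leb_le in E. rewrite es_wrep, Z2Nat.id by lia. reflexivity.
  - apply Z.leb_gt in E. rewrite es_wrep, es_winv, Z2Nat.id by lia. ring.
Qed.
Lemma es_delta m : (1 <= m)%nat -> 0 < es (delta m).
Proof.
  intro H. unfold delta, Delta. destruct (Nat.odd m).
  - rewrite es_app, es_Pi by reflexivity. lia.
  - rewrite es_Pi by reflexivity. lia.
Qed.

Lemma indep_pos m p q : (2 <= m)%nat -> 0 <= q ->
  artin_eq m (wpow (delta m) p ++ wpow [a1] q) [] -> p = 0 /\ q = 0.
Proof.
  intros H2 Hq H.
  assert (Hq0 : q = 0).
  { destruct (Z.eq_dec q 0) as [|Hn]; [assumption|exfalso].
    pose proof (phi_inv m _ _ H2 H [] I) as E.
    rewrite phi_app, phi_dpow in E by solve_val. rewrite phi_nil in E.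
    destruct (par_cases m H2) as [[j [Hm Hj]]|[j [Hm Hj]]].
    - assert (Ha : forall X, valid (ordm m) X -> phi m [a1] X = pre (ordm m) (false, 1) X).
      { intros X HX. unfold a1. rewrite phi_cons, phi_nil, (img_even m j _ Hm). reflexivity. }
      rewrite (phi_wpow_E m [a1] false 1 q [] H2 Ha I) in E.
      rewrite pre_nil, nrm_z, cons_syl_n0 in E; [discriminate|lia|exact (ordm_eF m j Hm)].
    - replace q with (Z.of_nat (S (Z.to_nat q - 1))) in E by lia.
      rewrite wpow_nat in E. fold (psi m (wrep [a1] (S (Z.to_nat q - 1)))) in E.
      destruct (psi_a1pow m j (Z.to_nat q - 1) Hm Hj) as [X [HX _]]. congruence. }
  subst q. split; [|reflexivity].
  apply es_inv in H. rewrite es_app, !es_wpow in H. simpl in H.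
  pose proof (es_delta m ltac:(lia)). nia.
Qed.

Lemma indep m p q : (2 <= m)%nat ->
  artin_eq m (wpow (delta m) p ++ wpow [a1] q) [] -> p = 0 /\ q = 0.
Proof.
  intros H2 H. destruct (Z_le_gt_dec 0 q).
  - now apply (indep_pos m).
  - assert (H' : artin_eq m (wpow (delta m) (- p) ++ wpow [a1] (- q)) []).
    { apply (winv_Proper m) in H. rewrite winv_app, !wpow_inv in H.
      rewrite (dc m (- p) (wpow [a1] (- q)) H2). exact H. }
    destruct (indep_pos m (- p) (- q) H2 ltac:(lia) H'). lia.
Qed.

Close Scope Z_scope.

Theorem lemma2p4 (m : nat) (k1 k2 : Z) :
  (2 <= m)%nat -> k2 <> 0%Z ->
  (forall w : word,
      artin_eq m (w ++ (wpow (delta m) k1 ++ wpow [a1] k2))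
                 ((wpow (delta m) k1 ++ wpow [a1] k2) ++ w)
      <-> exists p q : Z, artin_eq m w (wpow (delta m) p ++ wpow [a1] q))
  /\ artin_eq m (delta m ++ [a1]) ([a1] ++ delta m)
  /\ (forall p q : Z,
        artin_eq m (wpow (delta m) p ++ wpow [a1] q) [] -> p = 0%Z /\ q = 0%Z).
Proof.
  intros H2 Hk. split; [|split].
  - intro w. split.
    + intro H. apply (cent m k2 w H2 Hk).
      apply (cancel_l m (wpow (delta m) k1)).
      rewrite app_assoc, (dc m k1 w H2), <- app_assoc, H, <- app_assoc. reflexivity.
    + intros [p [q Hw]]. rewrite Hw.
      rewrite <- !app_assoc, (app_assoc (wpow [a1] q)), <- (dc m k1 (wpow [a1] q) H2).
      rewrite <- app_assoc, (wpow_comm m [a1] q k2), !app_assoc.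
      rewrite (wpow_comm m (delta m) p k1).
      rewrite <- !app_assoc. rewrite (app_assoc (wpow (delta m) p) (wpow [a1] k2)).
      rewrite (dc m p (wpow [a1] k2) H2). rewrite <- !app_assoc. reflexivity.
  - apply (dc m 1 [a1]) in H2. rewrite (wpow_1 m (delta m)) in H2. exact H2.
  - intros p q. apply indep. exact H2.
Qed.
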